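(* Fix integers $k\ge 3$ and $r\ge 1$. For integers $a\ge 0$, $0\le b\le r$ and a finite list $L=[l_1,\dots,l_t]$ ($t\ge 0$) of positive integers, let $A(r,a,b,L)$ be the number of words $w$ over the positive integers that contain exactly $r$ copies of each of the letters $1,\dots,a$, exactly $b$ copies of the letter $a+1$, exactly $l_j$ copies of the letter $a+1+j$ for $1\le j\le t$, and no other letters, such that both $w$ and the word $(a+1)w$ (obtained by prepending the letter $a+1$) avoid both patterns $123$ and $1k(k-1)\cdots 2$. (The empty word is counted.) For a list $L$, let $R(L)$ be the list obtained by deleting all entries equal to $0$. Suppose $b\ge 1$ and $t\le k-2$. Then $$A(r,a,b,L)=\sum_{i=\max(1,\ a-(k-2)+t+1)}^{a} A\big(r,\ i-1,\ r-1,\ [\underbrace{r,\dots,r}_{a-i\text{ copies}},\ b,\ l_1,\dots,l_t]\big)\ +\ A(r,a,b-1,L)\ +\ \delta_{t\ge 1}\,A\big(r,a,b,R([l_1,\dots,l_{t-1},l_t-1])\big),$$ where the sum is empty if its lower limit exceeds $a$, and $\delta_{t\ge1}$ equals $1$ if $t\ge 1$ and $0$ if $t=0$.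
   Context: A word $w_1\cdots w_m$ over the positive integers contains a pattern $p_1\cdots p_k$ if there are indices $i_1<\dots<i_k$ such that for all $r,s$: $w_{i_r}<w_{i_s}\iff p_r<p_s$ and $w_{i_r}>w_{i_s}\iff p_r>p_s$; otherwise it avoids it. The pattern $1k(k-1)\cdots 2$ is the permutation of length $k$ whose first entry is $1$ followed by $k,k-1,\dots,2$ in decreasing order (for $k=3$ it is $132$). *)

(* Defs.v *)
From mathcomp Require Import all_boot.
Set Implicit Arguments. Unset Strict Implicit. Unset Printing Implicit Defensive.

Fixpoint subseqs (w : seq nat) : seq (seq nat) :=
  if w is x :: w' then [seq x :: s | s <- subseqs w'] ++ subseqs w' else [:: [::]].

Definition order_iso (s p : seq nat) : bool :=
  all (fun i => all (fun j =>
        ((nth 0 s i < nth 0 s j) == (nth 0 p i < nth 0 p j)) &&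
        ((nth 0 s i > nth 0 s j) == (nth 0 p i > nth 0 p j)))
      (iota 0 (size p))) (iota 0 (size p)).

Definition contains (w p : seq nat) : bool :=
  has (fun s => (size s == size p) && order_iso s p) (subseqs w).

Definition avoids (w p : seq nat) : bool := ~~ contains w p.

Definition pat1k (k : nat) : seq nat := 1 :: rev (iota 2 k.-1).

Definition pat123 : seq nat := [:: 1; 2; 3].

Definition base_word (r a b : nat) (L : seq nat) : seq nat :=
  flatten [seq nseq r i | i <- iota 1 a] ++ nseq b a.+1 ++
  flatten [seq nseq (nth 0 L j) (a + 2 + j) | j <- iota 0 (size L)].

Definition good (k a : nat) (w : seq nat) : bool :=
  [&& avoids w pat123, avoids w (pat1k k),
      avoids (a.+1 :: w) pat123 & avoids (a.+1 :: w) (pat1k k)].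

(* A(r,a,b,L): number of words with exactly these letter multiplicities
   (= distinct rearrangements of base_word, `permutations` is duplicate-free)
   that are good. *)
Definition A (k r a b : nat) (L : seq nat) : nat :=
  count (good k a) (permutations (base_word r a b L)).

Definition Rz (L : seq nat) : seq nat := [seq x <- L | x != 0].

(* Main.v *)
Require Import Defs.
From mathcomp Require Import all_boot zify.
Set Implicit Arguments. Unset Strict Implicit. Unset Printing Implicit Defensive.

Lemma mem_subseqs s w : (s \in subseqs w) = subseq s w.
Proof.
elim: w s => [|x w IH] s /=.
  by rewrite inE; case: s.
rewrite mem_cat IH; case: s => [|y s] /=.
  by rewrite sub0seq orbT.
apply/orP/idP.
- case=> [/mapP [s' Hs' [Ey Es]]|H]; first by subst; rewrite eqxx -IH.
  case: eqP => // Eyx; rewrite Eyx in H; exact: subseq_trans (subseq_cons s x) H.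
- case: eqP => [->|_] H; last by right.
  by left; apply/mapP; exists s => //; rewrite IH.
Qed.

Lemma subseq_consP (y : nat) s w : subseq s (y :: w) ->
  subseq s w \/ exists s', s = y :: s' /\ subseq s' w.
Proof.
case: s => [|x s] /=; first by left; exact: sub0seq.
by case: eqP => [->|_] H; [right; exists s | left].
Qed.

Lemma containsP w p :
  reflect (exists2 s, subseq s w & (size s == size p) && order_iso s p) (contains w p).
Proof.
apply: (iffP hasP) => [[s]|[s]].
  by rewrite mem_subseqs => Hs H; exists s.
by move=> Hs H; exists s; rewrite ?mem_subseqs.
Qed.

Lemma contains_sub u v p : subseq u v -> contains u p -> contains v p.
Proof.
move=> Huv /containsP [s Hs H]; apply/containsP; exists s => //.
exact: subseq_trans Huv.
Qed.

Lemma contains_cons x w p : contains w p -> contains (x :: w) p.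
Proof. apply: contains_sub; exact: subseq_cons. Qed.

Lemma contains_consP x w p : contains (x :: w) p ->
  contains w p \/ exists2 s, subseq s w & (size (x :: s) == size p) && order_iso (x :: s) p.
Proof.
move=> /containsP [s Hs H].
case: (subseq_consP Hs) => [Hs'|[s' [E Hs']]].
  by left; apply/containsP; exists s.
by right; exists s' => //; rewrite -E.
Qed.

Lemma starts_contains x s w p : subseq s w -> size (x :: s) = size p ->
  order_iso (x :: s) p -> contains (x :: w) p.
Proof.
move=> Hs Hz Hi; apply/containsP; exists (x :: s).
  by rewrite /= eqxx.
by rewrite Hz eqxx.
Qed.

Lemma isoP s p : size s = size p ->
  reflect (forall i j, i < size p -> j < size p ->
            (nth 0 s i < nth 0 s j) = (nth 0 p i < nth 0 p j)) (order_iso s p).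
Proof.
move=> Hz; apply: (iffP idP).
- move=> /allP H i j Hi Hj.
  have Hi' : i \in iota 0 (size p) by rewrite mem_iota.
  have Hj' : j \in iota 0 (size p) by rewrite mem_iota.
  by move: (H i Hi') => /allP /(_ j Hj') /andP [/eqP E _].
- move=> H; apply/allP => i; rewrite mem_iota /= => Hi; apply/allP => j.
  rewrite mem_iota /= => Hj.
  by rewrite (H i j Hi Hj) (H j i Hj Hi) !eqxx.
Qed.
Lemma iso_lt s p i j : size s = size p -> order_iso s p -> i < size p -> j < size p ->
  (nth 0 s i < nth 0 s j) = (nth 0 p i < nth 0 p j).
Proof. by move=> Hz /(isoP Hz) H; apply: H. Qed.

Definition first_min (p : seq nat) :=
  forall j, 0 < j < size p -> nth 0 p 0 < nth 0 p j.

Lemma head_replace x y s p : size (x :: s) = size p -> order_iso (x :: s) p ->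
  y <= x -> first_min p -> order_iso (y :: s) p.
Proof.
move=> Hz Hi Hyx Hf; apply/isoP => // -[|i] [|j] Hip Hjp /=.
- by rewrite !ltnn.
- have Hp := Hf j.+1 (ltac:(by rewrite Hjp)).
  have := iso_lt Hz Hi Hip Hjp; rewrite /= Hp => Hx.
  by apply: leq_ltn_trans Hyx _; rewrite Hx.
- have := iso_lt Hz Hi Hip Hjp; rewrite /=.
  have Hp := Hf i.+1 (ltac:(by rewrite Hip)).
  have Hp' : (nth 0 p i.+1 < nth 0 p 0) = false by apply/negbTE; rewrite -leqNgt ltnW.
  rewrite Hp' => Hx; apply/negbTE; rewrite -leqNgt.
  by apply: leq_trans Hyx _; rewrite leqNgt Hx.
- exact: (iso_lt Hz Hi Hip Hjp).
Qed.

Lemma drop_dup c y w p : y <= c -> first_min p -> 2 <= size p ->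
  contains (c :: y :: w) p = contains (y :: w) p.
Proof.
move=> Hyc Hf H2; apply/idP/idP; last exact: contains_cons.
case/contains_consP => // -[s Hs /andP [/eqP Hz Hi]].
case: (subseq_consP Hs) => [Hs'|[s' [E Hs']]].
  apply: (starts_contains Hs') => //; exact: head_replace Hi Hyc Hf.
subst s.
have := iso_lt Hz Hi (ltnW H2) H2; rewrite /= (Hf 1); last by rewrite H2.
by rewrite ltnNge Hyc.
Qed.

Lemma contains_max m w p : (forall z, z \in w -> z <= m) -> first_min p -> 2 <= size p ->
  contains (m :: w) p = contains w p.
Proof.
move=> Hm Hf H2; apply/idP/idP; last exact: contains_cons.
case/contains_consP => // -[s Hs /andP [/eqP Hz Hi]].
case: s Hs Hz Hi => [|z s] Hs Hz Hi; first by rewrite -Hz in H2.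
have := iso_lt Hz Hi (ltnW H2) H2; rewrite /= (Hf 1); last by rewrite H2.
have : z \in w by apply: (mem_subseq Hs); rewrite inE eqxx.
by move/Hm; rewrite ltnNge => ->.
Qed.

Lemma first_min123 : first_min pat123.
Proof. by case=> [|[|[|j]]]. Qed.

Lemma inc_contains c x z w : c < x -> x < z -> z \in w -> contains (c :: x :: w) pat123.
Proof.
move=> Hcx Hxz Hz; apply: (@starts_contains c [:: x; z]).
- by rewrite /= eqxx sub1seq.
- by [].
apply/isoP => // -[|[|[|i]]] [|[|[|j]]] //= _ _; lia.
Qed.

Lemma max123 c m w : (forall z, z \in w -> z <= m) ->
  contains (c :: m :: w) pat123 = contains (c :: w) pat123.
Proof.
move=> Hm; apply/idP/idP.
  case/contains_consP.
    by rewrite contains_max //; [exact: contains_cons | exact: first_min123].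
  case=> s Hs /andP [/eqP Hz Hi].
  case: (subseq_consP Hs) => [Hs'|[s' [E Hs']]].
    exact: (starts_contains Hs').
  subst s; clear Hs; case: s' Hs' Hz Hi => [|z [|z' s']] //= Hs' Hz Hi.
  have := iso_lt (i:=1) (j:=2) (erefl : size [:: c; m; z] = size pat123) Hi isT isT; rewrite /=.
  have : z \in w by apply: (mem_subseq Hs'); rewrite inE eqxx.
  by move/Hm; rewrite ltnNge => ->.
apply: contains_sub; rewrite /= eqxx; exact: subseq_cons.
Qed.

Lemma size_pat1k k : 0 < k -> size (pat1k k) = k.
Proof. by case: k => // k _; rewrite /pat1k /= size_rev size_iota. Qed.

Lemma nth_pat1k k j : 0 < j < k -> nth 0 (pat1k k) j = k.+1 - j.
Proof.
case: j => [|j] //= H.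
rewrite nth_rev size_iota; last lia.
rewrite nth_iota; lia.
Qed.

Lemma first_min_pat1k k : 2 <= k -> first_min (pat1k k).
Proof.
move=> Hk j; rewrite size_pat1k; last lia.
move=> Hj; rewrite (nth_pat1k (j:=j)) //=; lia.
Qed.

Lemma max1k c m w k : 3 <= k -> c < m -> m <= c + (k - 2) ->
  (forall z, z \in w -> z <= m) ->
  contains (c :: m :: w) (pat1k k) = contains (c :: w) (pat1k k).
Proof.
move=> Hk Hcm Hmk Hm; have Hsz := size_pat1k (ltac:(lia) : 0 < k).
apply/idP/idP.
  case/contains_consP.
    have Hf := first_min_pat1k (ltac:(lia) : 2 <= k).
    have H2 : 2 <= size (pat1k k) by rewrite Hsz; lia.
    rewrite (contains_max Hm Hf H2); exact: contains_cons.
  case=> s Hs /andP [/eqP Hz Hi].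
  case: (subseq_consP Hs) => [Hs'|[s' [E Hs']]].
    exact: (starts_contains Hs').
  subst s; clear Hs.
  set v := fun j => nth 0 (c :: m :: s') j.
  have HL : forall i0 j0, i0 < k -> j0 < k -> (v i0 < v j0) = (nth 0 (pat1k k) i0 < nth 0 (pat1k k) j0).
    by move=> i0 j0 Hi0 Hj0; apply: iso_lt => //; rewrite Hsz.
  have F0 : forall j, 2 <= j < k -> c < v j.
    move=> j Hj; have := HL 0 j (ltac:(lia)) (ltac:(lia)).
    rewrite (nth_pat1k (j:=j)); last lia.
    by rewrite /= => ->; lia.
  have F1 : forall j, 2 <= j -> j.+1 < k -> v j.+1 < v j.
    move=> j H1 H2; rewrite HL ?nth_pat1k; lia.
  have F2 : v 2 < m.
    have -> : m = v 1 by [].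
    rewrite HL ?nth_pat1k; lia.
  have Cl : forall n, 2 + n < k -> v (2 + n) + n < m.
    elim=> [|n IH] H; first by rewrite addn0.
    have := IH (ltac:(lia)); have := F1 (2 + n) (ltac:(lia)) (ltac:(lia)).
    rewrite -addnS; lia.
  have := Cl (k - 3) (ltac:(lia)); have := F0 (2 + (k - 3)) (ltac:(lia)).
  lia.
apply: contains_sub; rewrite /= eqxx; exact: subseq_cons.
Qed.

Lemma desc_subseq i S w : sorted (fun a b => b < a) S -> {subset S <= w} ->
  all (fun z => i < z) S ->
  (forall u v, subseq [:: u; v] w -> i < u -> u < v -> False) -> subseq S w.
Proof.
elim: w S => [|y w IH] S HS Hsub Hall Hni.
  by case: S HS Hsub Hall => // z S _ /(_ z); rewrite inE eqxx => /(_ isT).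
case: S HS Hsub Hall => [|s1 S'] HS Hsub Hall; first exact: sub0seq.
have Htr : transitive (fun a b : nat => b < a).
  by move=> a b c H1 H2; exact: ltn_trans H2 H1.
move: (HS); rewrite /= (path_sortedE Htr) => /andP [Hs1 HS'].
move: Hall => /= /andP [Hi1 HallS'].
have Hni' : forall u v, subseq [:: u; v] w -> i < u -> u < v -> False.
  move=> u v Huv; apply: Hni; exact: subseq_trans Huv (subseq_cons w y).
rewrite /=; case: eqP => [E|NE].
  subst y; apply: IH => // z Hz.
  have Hzs : z < s1 by move/allP: Hs1 => /(_ z Hz).
  have := Hsub z; rewrite !inE Hz orbT => /(_ isT) /orP [/eqP E|] //.
  by rewrite E ltnn in Hzs.
have Hs1w : s1 \in w.
  have := Hsub s1; rewrite !inE eqxx => /(_ isT) /orP [/eqP E1|//].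
  by exfalso; apply: NE.
apply: (IH (s1 :: S')) => //; last by rewrite /= Hi1.
move=> z; rewrite inE => /orP [/eqP -> //|Hz].
have := Hsub z; rewrite !inE Hz orbT => /(_ isT) /orP [/eqP E|] //.
subst z; exfalso; apply: (Hni y s1).
- by rewrite /= eqxx sub1seq.
- by move/allP: HallS' => /(_ y Hz).
- by move/allP: Hs1 => /(_ y Hz).
Qed.

Lemma iso_shift d p : order_iso (map (addn d) p) p.
Proof.
apply/isoP; first by rewrite size_map.
by move=> i j Hi Hj; rewrite !(nth_map 0) // ltn_add2l.
Qed.

Lemma small_first i w k : 0 < i -> 3 <= k ->
  (forall z, i < z < i + k -> z \in w) ->
  contains (i :: w) pat123 || contains (i :: w) (pat1k k).
Proof.
move=> Hi Hk Hw; case Hc: (contains (i :: w) pat123) => //=.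
have Hni : forall u v, subseq [:: u; v] w -> i < u -> u < v -> False.
  move=> u v Huv Hiu Huv'; move: Hc; rewrite (@starts_contains i [:: u; v] w) //.
  apply/isoP => // -[|[|[|a]]] [|[|[|b]]] //= _ _; lia.
set S := rev (iota i.+1 (k - 1)).
have HS : subseq S w.
  apply: (desc_subseq (i := i)).
  - rewrite /S rev_sorted; exact: iota_ltn_sorted.
  - by move=> z; rewrite /S mem_rev mem_iota => Hz; apply: Hw; lia.
  - by apply/allP => z; rewrite /S mem_rev mem_iota; lia.
  - exact: Hni.
apply: (starts_contains HS).
  by rewrite size_pat1k; [rewrite /= size_rev size_iota; lia | lia].
have -> : i :: S = map (addn i.-1) (pat1k k).
  rewrite /pat1k /= map_rev -iotaDl /S; congr (_ :: rev (iota _ _)); lia.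
exact: iso_shift.
Qed.

Lemma sumn_iota_ind m n g y :
  sumn [seq (j == y) * g j | j <- iota m n] = (m <= y < m + n) * g y.
Proof.
elim: n m => [|n IH] m /=; first by rewrite addn0 andbC ltnNge andNb.
rewrite IH; case: (eqVneq m y) => [<-|ne].
  by rewrite ltnn /= leqnn /= addnS ltnS leq_addr; lia.
case: (ltngtP m y) => H.
- by rewrite /= addSn addnS.
- by [].
- by rewrite H eqxx in ne.
Qed.

Definition cntf r a b (L : seq nat) y :=
  (0 < y <= a) * r + (a.+1 == y) * b + (a.+2 <= y) * nth 0 L (y - a.+2).

Lemma count_base r a b L y : count_mem y (base_word r a b L) = cntf r a b L y.
Proof.
rewrite /base_word !count_cat !count_flatten -!map_comp.
rewrite (@eq_map _ _ _ (fun j => (j == y) * r)); last first.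
  by move=> j /=; rewrite count_nseq mulnC.
rewrite sumn_iota_ind count_nseq.
rewrite (@eq_map _ _ _ (fun j => (a.+2 + j == y) * nth 0 L j)); last first.
  by move=> j /=; rewrite count_nseq /= addn2.
have -> : [seq (a.+2 + j == y) * nth 0 L j | j <- iota 0 (size L)] =
          [seq (j == y) * nth 0 L (j - a.+2) | j <- iota a.+2 (size L)].
  rewrite -[a.+2]addn0 iotaDl -map_comp; apply: eq_map => j /=.
  by rewrite addn0 addKn.
rewrite sumn_iota_ind /cntf /=.
have E : (a.+2 <= y < a.+2 + size L) * nth 0 L (y - a.+2) = (a.+2 <= y) * nth 0 L (y - a.+2).
  case: (leqP (a.+2 + size L) y) => H.
    by rewrite nth_default ?muln0 //; lia.
  by rewrite andbT.
by rewrite E addnA add1n ltnS.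
Qed.

Lemma count_perms (Q : pred (seq nat)) s : 0 < size s ->
  count Q (permutations s) =
  \sum_(x <- undup s) count (fun t => Q (x :: t)) (permutations (rem x s)).
Proof.
move=> Hs; rewrite (permP (permutationsE Hs) Q) /allpairs_dep count_flatten.
rewrite sumnE !big_map; apply: eq_bigr => x _; by rewrite count_map.
Qed.

Lemma perm_cnt (s1 s2 : seq nat) : (forall z, count_mem z s1 = count_mem z s2) -> perm_eq s1 s2.
Proof. by move=> H; apply/allP => z _; apply/eqP. Qed.

Lemma A_perm (Q : pred (seq nat)) s1 s2 : perm_eq s1 s2 ->
  count Q (permutations s1) = count Q (permutations s2).
Proof. by move/perm_permutations/permP. Qed.

Lemma mem_cnt (z : nat) s : (z \in s) = (0 < count_mem z s).
Proof. by rewrite -has_pred1 has_count. Qed.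

Lemma good_small k a x w : 0 < x <= a.+1 -> 3 <= k -> good k a (x :: w) = good k x.-1 w.
Proof.
move=> Hx Hk; rewrite /good /avoids prednK; last by case/andP: Hx.
have Hf := first_min_pat1k (ltac:(lia) : 2 <= k).
have Hs : 2 <= size (pat1k k) by rewrite size_pat1k; lia.
have Hxc : x <= a.+1 by case/andP: Hx.
rewrite (drop_dup w Hxc first_min123) // (drop_dup w Hxc Hf Hs).
move: (@contains_cons x w pat123) (@contains_cons x w (pat1k k)).
case: (contains (x :: w) pat123); case: (contains (x :: w) (pat1k k));
  case: (contains w pat123); case: (contains w (pat1k k)) => //=.
all: by [move=> /(_ isT) | move=> _ /(_ isT)].
Qed.

Lemma good_max k a m w : 3 <= k -> a.+1 < m -> m <= a.+1 + (k - 2) ->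
  (forall z, z \in w -> z <= m) -> good k a (m :: w) = good k a w.
Proof.
move=> Hk H1 H2 Hw.
have Hf := first_min_pat1k (ltac:(lia) : 2 <= k).
have Hs : 2 <= size (pat1k k) by rewrite size_pat1k; lia.
rewrite /good /avoids max123 // max1k // ?(contains_max Hw Hf Hs) //.
by rewrite (contains_max Hw first_min123).
Qed.

Lemma good_mid_false k a x m w : a.+1 < x < m -> m \in w -> good k a (x :: w) = false.
Proof.
move=> /andP [H1 H2] Hm; rewrite /good /avoids (inc_contains H1 H2 Hm).
by rewrite !andbF.
Qed.

Lemma good_small_false k a i w : 0 < i -> 3 <= k ->
  (forall z, i < z < i + k -> z \in w) -> good k a (i :: w) = false.
Proof.
move=> Hi Hk Hw; rewrite /good /avoids.
by case/orP: (small_first Hi Hk Hw) => ->; rewrite ?andbF.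
Qed.

Lemma cpos r a b L z : 0 < r -> 0 < b -> all (fun l => 0 < l) L ->
  (0 < cntf r a b L z) = (0 < z <= a + 1 + size L).
Proof.
move=> Hr Hb /all_nthP HL; rewrite /cntf.
case: (leqP z a.+1) => Hz.
  case: (eqVneq a.+1 z) => E; lia.
have -> : (0 < z <= a) = false by lia.
have -> : (a.+1 == z) = false by apply/negbTE; lia.
rewrite /=.
case: (ltnP (z - a.+2) (size L)) => H.
  have := HL 0 _ H; lia.
rewrite nth_default //; lia.
Qed.

Lemma cnt_small r a b L x z : 0 < x <= a -> 0 < r ->
  cntf r a b L z - (x == z) = cntf r x.-1 r.-1 (nseq (a - x) r ++ b :: L) z.
Proof.
move=> Hx Hr; rewrite /cntf prednK; last by case/andP: Hx.
rewrite nth_cat size_nseq nth_nseq.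
case: (leqP z a.+1) => Hz.
  case: (ltnP x z) => Hxz.
    case: (ltnP z a.+1) => Hza.
      have -> : (z - x.+1 < a - x) = true by lia.
      have -> : (x == z) = false by apply/negbTE; lia.
      lia.
    have -> : (z - x.+1 < a - x) = false by apply/negbTE; lia.
    have -> : z - x.+1 - (a - x) = 0 by lia.
    have -> : (x == z) = false by apply/negbTE; lia.
    rewrite /=; lia.
  case: (eqVneq x z) => E; lia.
have -> : (z - x.+1 < a - x) = false by apply/negbTE; lia.
have -> : z - x.+1 - (a - x) = (z - a.+2).+1 by lia.
have -> : (x == z) = false by apply/negbTE; lia.
rewrite /=; lia.
Qed.

Lemma cnt_c r a b L z : 0 < b -> cntf r a b L z - (a.+1 == z) = cntf r a b.-1 L z.
Proof. by move=> Hb; rewrite /cntf; case: (eqVneq a.+1 z) => E; lia. Qed.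

Lemma cnt_last r a b L0 l z : 0 < l ->
  cntf r a b (rcons L0 l) z - (a.+2 + size L0 == z) =
  cntf r a b (if l.-1 != 0 then rcons L0 l.-1 else L0) z.
Proof.
move=> Hl; rewrite /cntf.
case: (leqP a.+2 z) => Hz; last first.
  have -> : (a.+2 + size L0 == z) = false by apply/negbTE; lia.
  by rewrite /= !mul0n !addn0 subn0.
have E : z = a.+2 + (z - a.+2) by lia.
move: E; set j := z - a.+2 => E.
rewrite E eqn_add2l !mul1n nth_rcons.
have -> : (0 < a.+2 + j <= a) = false by lia.
have -> : (a.+1 == a.+2 + j) = false by lia.
rewrite !mul0n !add0n.
case: ifP => Hl1.
  have -> : (size L0 == j) = false by lia.
  by case: ifP => _; [rewrite nth_rcons Hl1 |]; lia.
case: (eqVneq j (size L0)) => Ej.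
  case: ifP => Hl2.
    rewrite Ej nth_rcons ltnn eqxx; lia.
  rewrite nth_default; lia.
case: ifP => _; [rewrite nth_rcons Hl1 (negbTE Ej) | rewrite nth_default]; lia.
Qed.

Unset Implicit Arguments.
Theorem theorem2 (k r a b : nat) (L : seq nat) :
  3 <= k -> 1 <= r -> 1 <= b -> b <= r -> all (fun l => 0 < l) L ->
  size L <= k - 2 ->
  A k r a b L =
    \sum_(maxn 1 (a + size L + 3 - k) <= i < a.+1)
        A k r i.-1 r.-1 (nseq (a - i) r ++ b :: L)
    + A k r a b.-1 L
    + (if 1 <= size L then
         A k r a b (Rz (rcons (take (size L).-1 L) (last 0 L).-1))
       else 0).
Proof.
move=> Hk Hr Hb Hbr HL HtL.
set M := base_word r a b L; set t := size L.
have cM : forall z, count_mem z M = cntf r a b L z by move=> z; exact: count_base.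
have inM : forall z, (z \in M) = (0 < z <= a + 1 + t).
  by move=> z; rewrite mem_cnt cM cpos.
have memw : forall x w z, w \in permutations (rem x M) ->
    (z \in w) = (0 < cntf r a b L z - (x == z)).
  move=> x w z; rewrite mem_permutations => /perm_mem ->.
  by rewrite mem_cnt count_mem_rem cM.
have HM : 0 < size M.
  have : a.+1 \in M by rewrite inM; lia.
  by case: (M).
rewrite /A -/M (count_perms _ HM).
have Hu : perm_eq (undup M) (iota 1 (a + 1 + t)).
  apply: uniq_perm; [exact: undup_uniq | exact: iota_uniq |] => z.
  by rewrite mem_undup inM mem_iota; lia.
rewrite (perm_big _ Hu).
have -> : iota 1 (a + 1 + t) = index_iota 1 (a + 1 + t).+1.
  by rewrite /index_iota subSS subn0.
set f := fun x => count (fun w => good k a (x :: w)) (permutations (rem x M)).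
set lo := maxn 1 (a + t + 3 - k).
rewrite (@big_cat_nat _ _ _ lo) /=; [| lia | lia].
rewrite (@big_cat_nat _ _ _ a.+1 lo) /=; [| lia | lia].
rewrite (@big_cat_nat _ _ _ a.+2 a.+1) /=; [| lia | lia].
rewrite big_nat1.
have P1 : \sum_(1 <= i < lo) f i = 0.
  apply: big1_seq => x; rewrite mem_index_iota => /andP [Hx0 Hx].
  apply/eqP; rewrite -leqn0 leqNgt -has_count; apply/hasPn => w Hw.
  rewrite good_small_false //; first lia.
  move=> z Hz; rewrite (memw _ _ _ Hw).
  have -> : (x == z) = false by apply/negbTE; lia.
  rewrite subn0 cpos //; lia.
rewrite P1 add0n.
have P2 : \sum_(lo <= i < a.+1) f i =
          \sum_(lo <= i < a.+1) A k r i.-1 r.-1 (nseq (a - i) r ++ b :: L).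
  apply: eq_big_nat => x Hx.
  rewrite /f /A (@eq_count _ _ (good k x.-1)); last first.
    by move=> w; rewrite good_small //; lia.
  apply: A_perm; apply: perm_cnt => z.
  rewrite count_mem_rem cM count_base cnt_small //; lia.
rewrite P2.
have P3 : count (fun w => good k a (a.+1 :: w)) (permutations (rem a.+1 M)) =
    count (good k a) (permutations (base_word r a b.-1 L)).
  rewrite (@eq_count _ _ (good k a)); last first.
    by move=> w; rewrite good_small //; lia.
  apply: A_perm; apply: perm_cnt => z.
  by rewrite count_mem_rem cM count_base cnt_c.
rewrite P3 !addnA; congr (_ + _).
clear P1 P2 P3.
case: (posnP t) => Ht.
  by rewrite Ht /= big_geq //; lia.
have [L0 [l EL]] : exists L0 l, L = rcons L0 l.
  case EL0: L Ht => [|x s]; first by rewrite /t EL0.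
  by move=> _; exists (belast x s), (last x s); rewrite lastI.
have Et : t = (size L0).+1 by rewrite /t EL size_rcons.
move: (HL); rewrite EL all_rcons => /andP [Hl HL0].
rewrite (big_nat_recr _ _ _ (ltac:(lia) : a.+2 <= a + 1 + t)) /=.
have P4 : \sum_(a.+2 <= i < a + 1 + t)
    count (fun w => good k a (i :: w)) (permutations (rem i M)) = 0.
  apply: big1_seq => x; rewrite mem_index_iota => /andP [Hx0 Hx].
  apply/eqP; rewrite -leqn0 leqNgt -has_count; apply/hasPn => w Hw.
  rewrite (@good_mid_false _ _ _ (a + 1 + t)) //.
  rewrite (memw _ _ _ Hw).
  have -> : (x == a + 1 + t) = false by apply/negbTE; lia.
  rewrite subn0 cpos //; lia.
rewrite P4 add0n.
rewrite (@eq_in_count _ _ (good k a)); last first.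
  move=> w Hw; rewrite good_max //; try lia.
  move=> z Hz; move: (Hz); rewrite (memw _ _ _ Hw) => Hz'.
  have : 0 < cntf r a b L z by lia.
  rewrite cpos //; lia.
apply: A_perm; apply: perm_cnt => z.
rewrite count_mem_rem cM count_base.
have -> : t.-1 = size L0 by rewrite Et.
rewrite -[rcons L0 l]cats1 take_size_cat // cats1 last_rcons /Rz filter_rcons EL.
have HF : [seq x <- L0 | x != 0] = L0.
  by apply/all_filterP; apply: sub_all HL0 => x; rewrite lt0n.
rewrite HF.
have -> : a + 1 + t = a.+2 + size L0 by lia.
by rewrite cnt_last.
Qed.
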